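(* Let $p$ be an odd prime and let $f:\mathbb{F}_{p^{2k}}\to\mathbb{F}_p$ satisfy Condition A with sign $\epsilon$. Let $D=\{x\in\mathbb{F}_{p^{2k}}^*: f(x)=0\}$. Then $D$ is a $(v,d,\lambda_1,\lambda_2)$ partial difference set in the additive group of $\mathbb{F}_{p^{2k}}$, where $v=p^{2k}$, $d=(p^k-\epsilon)(p^{k-1}+\epsilon)$, $\lambda_1=(p^{k-1}+\epsilon)^2-3\epsilon(p^{k-1}+\epsilon)+\epsilon p^k$, $\lambda_2=(p^{k-1}+\epsilon)p^{k-1}$. Consequently the Cayley graph on $\mathbb{F}_{p^{2k}}$ in which $x,y$ are adjacent iff $x-y\in D$ is a strongly regular graph with these parameters.
   Context: Let $\zeta_p$ be a primitive complex $p$-th root of unity and $\mathrm{tr}$ the absolute trace from $\mathbb{F}_{p^{2k}}$ to $\mathbb{F}_p$. For $f:\mathbb{F}_{p^{2k}}\to\mathbb{F}_p$ the Walsh transform is $\mathcal{W}_f(b)=\sum_{x\in\mathbb{F}_{p^{2k}}}\zeta_p^{f(x)+\mathrm{tr}(bx)}$. Condition A: $p$ is an odd prime and $f:\mathbb{F}_{p^{2k}}\to\mathbb{F}_p$ satisfies $f(0)=0$, $f(-x)=f(x)$ for all $x$; there is an integer $l$ with $\gcd(l-1,p-1)=1$ such that $f(\alpha x)=\alpha^l f(x)$ for all $\alpha\in\mathbb{F}_p$, $x\in\mathbb{F}_{p^{2k}}$; and there exist a constant $\epsilon\in\{1,-1\}$ and a function $f^*:\mathbb{F}_{p^{2k}}\to\mathbb{F}_p$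 such that $\mathcal{W}_f(b)=\epsilon p^k\zeta_p^{f^*(b)}$ for all $b\in\mathbb{F}_{p^{2k}}$. A $d$-subset $D$ of a finite abelian group $G$ (written additively, of order $v$) with $0\notin D$ is a $(v,d,\lambda,\mu)$ partial difference set (PDS) if every nonzero element of $D$ can be written as $g-h$ with $g,h\in D$ in exactly $\lambda$ ways, and every nonzero element of $G\setminus D$ can be written so in exactly $\mu$ ways. *)

(* Defs.v *)
From HB Require Import structures.
From mathcomp Require Import all_boot all_order all_algebra all_field.
Set Implicit Arguments. Unset Strict Implicit. Unset Printing Implicit Defensive.
Import Order.TTheory GRing.Theory Num.Theory.
Local Open Scope ring_scope.

(* Absolute trace F -> F_p, where F is a finite field of order p^n (n = 2k here):
   tr(x) = sum_{i<n} x^(p^i), an element of the prime subfield of F, transported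
   to 'F_p as the unique a : 'F_p whose image (val a)%:R in F equals it. *)
Definition abs_trace (F : finFieldType) (p n : nat) (x : F) : 'F_p :=
  odflt 0 [pick a : 'F_p | ((val a)%:R : F) == \sum_(i < n) x ^+ (p ^ i)%N].

Definition walsh (F : finFieldType) (p n : nat) (zeta : algC) (f : F -> 'F_p)
  (b : F) : algC :=
  \sum_(x : F) zeta ^+ (val (f x + @abs_trace F p n (b * x))).

Definition conditionA (F : finFieldType) (p k : nat) (zeta : algC)
  (f : F -> 'F_p) (eps : int) : Prop :=
  prime p /\ odd p /\ f 0 = 0 /\ (forall x, f (- x) = f x) /\
      (exists l : int, gcdz (l - 1) (p.-1)%:Z = 1%N /\
          forall (a : 'F_p) (x : F), f ((val a)%:R * x) = a ^ l * f x) /\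
      (eps = 1 \/ eps = -1) /\
      exists fstar : F -> 'F_p, forall b : F,
        @walsh F p (2 * k)%N zeta f b = eps%:~R * (p ^ k)%:R * zeta ^+ (val (fstar b)).

Definition is_PDS (G : finZmodType) (D : {set G}) (v d lam mu : int) : Prop :=
  [/\ #|G|%:Z = v, #|D|%:Z = d, (0 : G) \notin D &
      forall g : G, g != 0 ->
        #|[set xy : G * G | [&& xy.1 \in D, xy.2 \in D & xy.1 - xy.2 == g]]|%:Z
          = (if g \in D then lam else mu)].

Definition is_SRG (T : finType) (adj : rel T) (v d lam mu : int) : Prop :=
  [/\ #|T|%:Z = v, symmetric adj, irreflexive adj,
      (forall x, #|[set y | adj x y]|%:Z = d) &
      forall x y, x != y ->
        #|[set z | adj x z && adj y z]|%:Z = (if adj x y then lam else mu)].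

Definition cayley (G : finZmodType) (D : {set G}) : rel G :=
  fun x y => (x - y) \in D.

(* Main.v *)
Require Import Defs.
From HB Require Import structures.
From mathcomp Require Import all_boot all_order all_algebra all_field.
From Stdlib Require Import Ring.
Import Order.TTheory GRing.Theory Num.Theory.
Local Open Scope ring_scope.

Definition addC (x y : algC) : algC := x + y.
Definition mulC (x y : algC) : algC := x * y.
Definition oppC (x : algC) : algC := - x.
Definition subC (x y : algC) : algC := x - y.
Definition zeroC : algC := 0.
Definition oneC : algC := 1.
Lemma algC_rt : @ring_theory algC zeroC oneC addC mulC subC oppC eq.
Proof.
split; rewrite /addC/mulC/subC/oppC/zeroC/oneC.
 exact: add0r. exact: addrC. exact: addrA. exact: mul1r. exact: mulrC. exact: mulrA. exact: mulrDl. done. exact: subrr.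
Qed.
Add Ring algC_ring : algC_rt.

Ltac ringC :=
  repeat match goal with |- context [@Algebra.add ?i ?x ?y] => progress change (@Algebra.add i x y) with (addC x y) end;
  repeat match goal with |- context [@GRing.mul ?i ?x ?y] => progress change (@GRing.mul i x y) with (mulC x y) end;
  repeat match goal with |- context [@Algebra.opp ?i ?x] => progress change (@Algebra.opp i x) with (oppC x) end;
  repeat match goal with |- context [@Algebra.zero ?i] => progress change (@Algebra.zero i) with zeroC end;
  repeat match goal with |- context [@GRing.one ?i] => progress change (@GRing.one i) with oneC end;
  match goal with |- ?a = ?b => change (@eq algC a b) end;
  ring.

Definition rr (P q E : algC) := E * q * (P - 1) - 1.
Definition ss (P q E : algC) := - (E * q) - 1.
Definition AA (P q E : algC) := rr P q E + ss P q E.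
Definition BB (P q E : algC) := - (rr P q E * ss P q E).

Lemma arith_d (P q E X : algC) : E = 1 \/ E = -1 -> P != 0 ->
  P * (1 + X) = P * P * q * q + E * (P * q) * (P - 1) -> X = (P * q - E) * (q + E).
Proof.
move=> hE P0 H.
have H1 : 1 + X = P * q * q + E * q * (P - 1).
  by apply: (mulfI P0); rewrite H; ringC.
have -> : X = (1 + X) - 1 by ringC.
by rewrite H1; case: hE => ->; ringC.
Qed.

Lemma arith_chi (P q E X : algC) (c : bool) : P != 0 ->
  P * (1 + X) = E * (P * q) * (if c then P - 1 else -1) ->
  X * X = AA P q E * X + BB P q E.
Proof.
move=> P0 H.
have H1 : 1 + X = E * q * (if c then P - 1 else -1).
  by apply: (mulfI P0); rewrite H; ringC.
have -> : X = (1 + X) - 1 by ringC.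
rewrite H1 /AA /BB /rr /ss; case: c {H H1}; ringC.
Qed.

Lemma arith_final (P q E C G : algC) (c : bool) : E = 1 \/ E = -1 -> P != 0 -> q != 0 ->
  let d0 := (P * q - E) * (q + E) in
  P * P * q * q * C = d0 * d0 + AA P q E * (P * P * q * q * (c%:R) - d0) - BB P q E ->
  C = if c then (q + E) * (q + E) - (1 + 1 + 1) * E * (q + E) + E * (P * q)
      else (q + E) * q.
Proof.
move=> hE P0 q0 d0 H.
have v0 : P * P * q * q != 0 by rewrite !mulf_neq0.
apply: (mulfI v0); rewrite H /d0 /AA /BB /rr /ss.
by case: c {H}; case: hE => ->; rewrite /= ?mulr1 ?mulr0; ringC.
Qed.

Section FpS.
Variables (p : nat).
Hypothesis pr : prime p.

Lemma Fp_lt (a : 'F_p) : (val a < p)%N.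
Proof. have := ltn_ord a; rewrite -[val a]/(nat_of_ord a); move: (nat_of_ord a) => m. by rewrite (Fp_cast pr). Qed.

Lemma Fp_natr (a : 'F_p) : a = (val a)%:R.
Proof. by apply: val_inj; rewrite /= (val_Fp_nat pr) modn_small ?Fp_lt. Qed.


Lemma Fp_add_val (a b : 'F_p) : a + b = (val a + val b)%:R.
Proof. by rewrite natrD -!Fp_natr. Qed.

Lemma Fp_mul_val (a b : 'F_p) : a * b = (val a * val b)%:R.
Proof. by rewrite natrM -!Fp_natr. Qed.

Lemma Fp_val_nat m : val (m%:R : 'F_p) = (m %% p)%N.
Proof. exact: val_Fp_nat. Qed.

Lemma card_Fp' : #|'F_p| = p. Proof. exact: card_Fp. Qed.

End FpS.

Section Trace.
Variables (F : finFieldType) (p n : nat).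
Hypothesis pcharF : p \in [pchar F].
Hypothesis cardF : #|F| = (p ^ n)%N.

Lemma pr_p : prime p. Proof. exact: pcharf_prime pcharF. Qed.
Lemma p_gt1 : (1 < p)%N. Proof. exact: prime_gt1 pr_p. Qed.

Definition io (a : 'F_p) : F := (val a)%:R.

Lemma io_nat m : io (m%:R) = m%:R.
Proof. by rewrite /io -[val _]/(nat_of_ord _) (val_Fp_nat pr_p) (GRing.natr_mod_pchar pcharF). Qed.

Lemma ioD a b : io (a + b) = io a + io b.
Proof. by rewrite {1}(@Fp_natr _ pr_p a) {1}(@Fp_natr _ pr_p b) -natrD io_nat natrD. Qed.

Lemma ioM a b : io (a * b) = io a * io b.
Proof. by rewrite {1}(@Fp_natr _ pr_p a) {1}(@Fp_natr _ pr_p b) -natrM io_nat natrM. Qed.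

Lemma io0 : io 0 = 0. Proof. by []. Qed.
Lemma io1 : io 1 = 1. Proof. by rewrite -[1]/(1%:R) io_nat. Qed.

Lemma ioX a m : io (a ^+ m) = io a ^+ m.
Proof. elim: m => [|m IH]; first by rewrite !expr0 io1. by rewrite !exprS ioM IH. Qed.

Lemma io_eq0 a : (io a == 0) = (a == 0).
Proof.
apply/idP/idP => [|/eqP->]; last by rewrite io0.
rewrite /io -(dvdn_pcharf pcharF) => /dvdn_leq H.
case: (posnP (val a)) => [a0|/H]; first by apply/eqP/val_inj.
by rewrite leqNgt (@Fp_lt _ pr_p).
Qed.

Lemma io_inj : injective io.
Proof.
move=> a b eab; apply/eqP; rewrite -subr_eq0 -io_eq0.
have: io (a - b) + io b = io a by rewrite -ioD subrK.
by rewrite eab -{2}[io b]add0r => /addIr ->.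
Qed.


Lemma io_fix a : io a ^+ p = io a.
Proof. by rewrite -ioX -{2}(card_Fp pr_p) expf_card. Qed.

Lemma io_fixn a i : io a ^+ (p ^ i) = io a.
Proof. elim: i => [|i IH]; first by rewrite expn0 expr1. by rewrite expnSr exprM IH io_fix. Qed.

Lemma frobD (x y : F) : (x + y) ^+ p = x ^+ p + y ^+ p.
Proof. by apply: exprDn_pchar; rewrite pnatE //; apply: pr_p. Qed.

Lemma frobDn (x y : F) i : (x + y) ^+ (p ^ i) = x ^+ (p ^ i) + y ^+ (p ^ i).
Proof. by apply: exprDn_pchar; rewrite pnatX pnatE ?pcharF //; apply: pr_p. Qed.

Lemma fixP (y : F) : y ^+ p = y -> exists a, io a = y.
Proof.
move=> yp.
pose S := [set z : F | z ^+ p == z].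
pose I := [set io a | a in 'F_p].
have IS : I \subset S by apply/subsetP => z /imsetP [a _ ->]; rewrite inE io_fix.
have cI : #|I| = p by rewrite card_imset ?card_Fp //; [exact: pr_p | exact: io_inj].
have cS : (#|S| <= p)%N.
  pose P : {poly F} := 'X^p - 'X.
  have sP : size P = p.+1 by rewrite size_addl ?size_polyXn // size_opp size_polyX ltnS p_gt1.
  have P0 : P != 0 by rewrite -size_poly_eq0 sP.
  have := max_poly_roots P0 (_ : all (root P) (enum S)) (enum_uniq _).
  rewrite -cardE sP ltnS; apply.
  by apply/allP => z; rewrite mem_enum inE /root hornerD hornerN hornerXn hornerX subr_eq0.
have eIS : #|I| = #|S| by apply/eqP; rewrite eqn_leq subset_leq_card // cI.
have := (subset_cardP eIS IS) y; rewrite inE yp eqxx => /imsetP [a _ ->]; by exists a.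
Qed.

Definition T (x : F) : F := \sum_(i < n) x ^+ (p ^ i).

Lemma T_fix x : T x ^+ p = T x.
Proof.
have z0 : (0:F) ^+ p = 0 by rewrite -(prednK (prime_gt0 pr_p)) exprS mul0r.
rewrite /T (big_morph (fun z : F => z ^+ p) frobD z0).
under eq_bigr do rewrite -exprM -expnSr.
have h1 : \sum_(i < n.+1) x ^+ (p ^ i) = \sum_(i < n) x ^+ (p ^ i) + x ^+ (p ^ n) by rewrite big_ord_recr.
have h2 : \sum_(i < n.+1) x ^+ (p ^ i) = x ^+ (p^0) + \sum_(i < n) x ^+ (p ^ i.+1) by rewrite big_ord_recl.
have e : x ^+ (p ^ n) = x ^+ (p ^ 0) by rewrite expn0 expr1 -cardF expf_card.
rewrite e h2 addrC in h1.
exact: (addIr _ h1).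
Qed.

Definition tr := @abs_trace F p n.

Lemma trP x : io (tr x) = T x.
Proof.
rewrite /tr /abs_trace; case: pickP => [a /eqP //|none].
have [a ea] := @fixP _ (T_fix x).
by move: (none a) => /=; rewrite -[X in X == _]/(io a) ea eqxx.
Qed.

Lemma trD x y : tr (x + y) = tr x + tr y.
Proof.
apply: io_inj; rewrite ioD !trP /T -big_split; apply: eq_bigr => i _; exact: frobDn.
Qed.

Lemma trZ a x : tr (io a * x) = a * tr x.
Proof.
apply: io_inj; rewrite ioM !trP /T mulr_sumr; apply: eq_bigr => i _.
by rewrite exprMn io_fixn.
Qed.

Lemma tr0 : tr 0 = 0.
Proof. by apply: (addrI (tr 0)); rewrite -trD !addr0. Qed.

Lemma trN x : tr (- x) = - tr x.
Proof. by apply: (addrI (tr x)); rewrite -trD !subrr tr0. Qed.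


Lemma tr_nontriv : (0 < n)%N -> exists w, tr w != 0.
Proof.
move=> n_gt0.
case: (pickP (fun w => tr w != 0)) => [w Hw|all0]; first by exists w.
exfalso.
pose P : {poly F} := \sum_(i < n) 'X^(p ^ i).
have PT x : P.[x] = T x by rewrite /P horner_sum; apply: eq_bigr => i _; rewrite hornerXn.
have Tz x : T x = 0.
  by rewrite -trP; have := all0 x; rewrite /=; case: eqP => // -> _; rewrite io0.
have i0 : (n.-1 < n)%N by rewrite prednK.
have P0 : P != 0.
  have h : P`_(p ^ n.-1) = 1.
    rewrite /P coef_sum (bigD1 (Ordinal i0)) //= coefXn eqxx big1 ?addr0 //.
    move=> j nj; rewrite coefXn eqn_exp2l ?p_gt1 // eq_sym.
    by move: nj; rewrite -val_eqE /= => /negPf ->.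
  by apply/eqP => P0; move: h; rewrite P0 coef0 => /eqP; rewrite eq_sym oner_eq0.
have sP : (size P <= (p ^ n.-1).+1)%N.
  apply: leq_trans (size_sum _ _ _) _.
  apply/bigmax_leqP => i _; rewrite size_polyXn ltnS leq_exp2l ?p_gt1 //.
  by rewrite -ltnS prednK.
have hr : all (root P) (enum F) by apply/allP => x _; rewrite /root PT Tz.
have := max_poly_roots P0 hr (enum_uniq _).
have -> : size (enum F) = #|F| by rewrite cardE.
rewrite cardF => /leq_trans /(_ sP); rewrite ltnS leqNgt ltn_exp2l ?p_gt1 //.
by rewrite prednK // leqnn.
Qed.

End Trace.

Section Char.
Variables (p : nat) (zeta : algC).
Hypothesis pr : prime p.
Hypothesis zp : p.-primitive_root zeta.

Definition e (a : 'F_p) : algC := zeta ^+ val a.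

Lemma e_nat m : e (m%:R) = zeta ^+ m.
Proof. by rewrite /e (@Fp_val_nat _ pr) (prim_expr_mod zp). Qed.

Lemma eD a b : e (a + b) = e a * e b.
Proof. by rewrite (@Fp_add_val _ pr) e_nat exprD. Qed.

Lemma e0 : e 0 = 1.
Proof. by rewrite /e expr0. Qed.

Lemma e_eq1 a : (e a == 1) = (a == 0).
Proof.
rewrite /e -(prim_order_dvd zp); apply/idP/idP => [/dvdn_leq H|/eqP->//].
case: (posnP (val a)) => [a0|/H]; first by apply/eqP/val_inj.
by rewrite leqNgt (@Fp_lt _ pr).
Qed.

Lemma eN a : e (- a) = (e a)^-1.
Proof.
have h : e (- a) * e a = 1 by rewrite -eD addNr e0.
have ea : e a != 0 by apply/eqP => ea; move: h; rewrite ea mulr0 => /eqP; rewrite eq_sym oner_eq0.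
by rewrite -[e (- a)]mulr1 -(mulfV ea) mulrA h mul1r.
Qed.

End Char.

Lemma sum_char (G : finZmodType) (psi : G -> algC) :
  (forall a b, psi (a + b) = psi a * psi b) -> forall c, psi c != 1 -> \sum_x psi x = 0.
Proof.
move=> psiD c pc.
have : \sum_x psi x = psi c * \sum_x psi x.
  rewrite mulr_sumr (reindex_inj (addrI c)) /=; apply: eq_bigr => x _; exact: psiD.
move/eqP; rewrite -subr_eq0 -{1}[\sum_x psi x]mul1r -mulrBl mulf_eq0 subr_eq0 eq_sym (negPf pc) /=.
by move/eqP.
Qed.

Section Char2.
Variables (p : nat) (zeta : algC).
Hypothesis pr : prime p.
Hypothesis zp : p.-primitive_root zeta.
Local Notation e := (@e p zeta).

Lemma sum_e_mul (c : 'F_p) : \sum_(y : 'F_p) e (y * c) = if c == 0 then p%:R else 0.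
Proof.
case: eqP => [->|/eqP c0].
  under eq_bigr do rewrite mulr0 e0.
  by rewrite sumr_const card_Fp.
apply: (@sum_char _ (fun y => e (y * c))) (c^-1) _.
  by move=> a b; rewrite mulrDl eD.
by rewrite mulVf // e_eq1 // oner_eq0.
Qed.

Lemma sum_e_mul_nz (c : 'F_p) :
  \sum_(y : 'F_p | y != 0) e (y * c) = if c == 0 then (p%:R - 1) else -1.
Proof.
have := sum_e_mul c; rewrite (bigD1 0) //= mul0r e0.
case: eqP => _ h; apply: (addrI 1); rewrite h; first by rewrite addrC subrK.
by rewrite subrr.
Qed.

Lemma galoisC (a : 'F_p) : a != 0 ->
  exists s : {rmorphism algC -> algC}, forall b, s (e b) = e (a * b).
Proof.
move=> a0.
have co : coprime (val a) p.
  rewrite coprime_sym prime_coprime //; apply/negP => /dvdn_leq H.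
  case: (posnP (val a)) => [av|/H]; last by rewrite leqNgt (@Fp_lt _ pr).
  by move: a0; have -> : a = 0 by apply/val_inj.
have [s hs] := Qn_aut_exists co.
exists s => b.
rewrite /e rmorphXn hs; last exact: prim_expr_order zp.
change (zeta ^+ val a ^+ val b = e (a * b)).
by rewrite -exprM (@Fp_mul_val _ pr a b) (@e_nat p zeta pr zp).
Qed.

End Char2.


Section Phi.
Variables (p : nat) (l : int).
Hypothesis pr : prime p.
Hypothesis gl : gcdz (l - 1) (p.-1)%:Z = 1%N.

Definition phi (a : 'F_p) := a * (a ^ l)^-1.

Lemma phiE a : a != 0 -> phi a = a ^ (1 - l).
Proof. by move=> a0; rewrite /phi invr_expz exprzDr ?unitfE // expr1z. Qed.

Lemma phi_eq0 a : (phi a == 0) = (a == 0).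
Proof.
rewrite /phi mulf_eq0 invr_eq0 expfz_eq0.
by case: (a == 0); rewrite ?andbF ?andbT ?orbF ?orbT ?orbb.
Qed.

Lemma Fp_pm1 (u : 'F_p) : u != 0 -> u ^+ p.-1 = 1.
Proof.
move=> u0; apply: (mulIf u0); rewrite mul1r -exprSr prednK ?prime_gt0 //.
by rewrite -{2}(expf_card u) card_Fp.
Qed.

Lemma phi_inj : injective phi.
Proof.
move=> a b e.
have ab0 : (a == 0) = (b == 0) by rewrite -phi_eq0 e phi_eq0.
case: (eqVneq a 0) ab0 => [-> /esym/eqP -> //|a0 b0].
have {}b0 : b != 0 by rewrite -b0.
rewrite !phiE // in e.
pose u := a / b.
have u0 : u != 0 by rewrite mulf_neq0 ?invr_eq0.
have h1 : u ^ (1 - l) = 1.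
  rewrite exprzMl ?unitfE ?invr_eq0 // -expfV e mulfV // expfz_neq0 //.
have h2 : u ^ (l - 1) = 1 by rewrite -opprB -invr_expz h1 invr1.
have h3 : u ^ ((p.-1)%:Z) = 1 by rewrite -exprnP Fp_pm1.
have [s [t st]] := Bezoutz (l - 1) (p.-1)%:Z.
have {}st : s * (l - 1) + t * (p.-1)%:Z = 1 by rewrite st gl.
have : u = 1.
  rewrite -[u]expr1z -st exprzDr ?unitfE // [s * _]mulrC [t * _]mulrC -!exprz_exp h2 h3.
  by rewrite !exp1rz mulr1.
by rewrite /u => /(congr1 (fun z => z * b)); rewrite mul1r divfK.
Qed.

End Phi.


Lemma card_sum (T : finType) (A : {set T}) : (#|A|%:R : algC) = \sum_x (x \in A)%:R.
Proof.
rewrite -sum1_card natr_sum big_mkcond /=; apply: eq_bigr => x _.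
by case: (x \in A).
Qed.

Lemma subKr' (R : zmodType) (x a : R) : x - (x - a) = a.
Proof. by rewrite opprB addrC subrK. Qed.
Lemma subBB (R : zmodType) (x y z : R) : (x - z) - (y - z) = x - y.
Proof. by rewrite opprB addrA subrK. Qed.
Lemma yxa (R : zmodType) (x y a : R) : y - (x - a) = a - (x - y).
Proof. by rewrite !opprB addrCA. Qed.

Section Main.
Variables (p k : nat) (F : finFieldType) (zeta : algC) (f : F -> 'F_p) (eps : int).
Hypothesis pcharF : p \in [pchar F].
Hypothesis cardF : #|F| = (p ^ (2 * k))%N.
Hypothesis zp : p.-primitive_root zeta.
Hypothesis odd_p : odd p.
Hypothesis f0 : f 0 = 0.
Hypothesis fN : forall x, f (- x) = f x.
Variable l : int.
Hypothesis gl : gcdz (l - 1) (p.-1)%:Z = 1%N.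
Hypothesis fhom : forall (a : 'F_p) (x : F), f ((val a)%:R * x) = a ^ l * f x.
Hypothesis heps : eps = 1 \/ eps = -1.
Variable fstar : F -> 'F_p.
Hypothesis Wf : forall b : F,
  @walsh F p (2 * k)%N zeta f b = eps%:~R * (p ^ k)%:R * zeta ^+ (val (fstar b)).

Local Notation n := (2 * k)%N.
Local Notation tr := (@tr F p n).
Local Notation e := (@e p zeta).
Local Notation io := (@io F p).

Let pr : prime p := @pr_p F p pcharF.
Let trD' := @trD F p n pcharF cardF.
Let tr0' := @tr0 F p n pcharF cardF.
Let trN' := @trN F p n pcharF cardF.
Let trZ' := @trZ F p n pcharF cardF.
Let eD' := @eD p zeta pr zp.
Let eN' := @eN p zeta pr zp.
Let e0' := @e0 p zeta.
Let e_eq1' := @e_eq1 p zeta pr zp.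
Let io_eq0' := @io_eq0 F p pcharF.

Lemma k_gt0 : (0 < k)%N.
Proof.
case: (posnP k) => // k0; exfalso.
have : (1 < #|F|)%N by apply/card_gt1P; exists 0, 1; rewrite !inE eq_sym oner_neq0.
by rewrite cardF k0.
Qed.

Let n_gt0 : (0 < n)%N. Proof. by rewrite muln_gt0 k_gt0. Qed.

Lemma orth (z : F) : \sum_(b : F) e (tr (b * z)) = if z == 0 then #|F|%:R else 0.
Proof.
case: eqP => [->|/eqP z0].
  by under eq_bigr do rewrite mulr0 tr0' e0; rewrite sumr_const.
have [w w0] := @tr_nontriv F p n pcharF cardF n_gt0.
apply: (@sum_char _ (fun b => e (tr (b * z)))) (w / z) _.
  by move=> a b; rewrite mulrDl trD' eD'.
by rewrite divfK // e_eq1'.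
Qed.

Lemma sigmaW (a : 'F_p) b : a != 0 ->
  \sum_x e (a * (f x + tr (b * x))) = eps%:~R * (p ^ k)%:R * e (a * fstar b).
Proof.
move=> a0; have [s hs] := @galoisC p zeta pr zp a a0.
have := congr1 s (Wf b); rewrite /walsh rmorph_sum.
have E : \sum_x s (zeta ^+ val (f x + tr (b * x))) = \sum_x e (a * (f x + tr (b * x))).
  by apply: eq_bigr => x _; exact: hs.
have E2 : s (zeta ^+ val (fstar b)) = e (a * fstar b) by exact: hs.
by rewrite E => ->; rewrite !rmorphM rmorph_int rmorph_nat E2.
Qed.


Let sum_e_mul' := @sum_e_mul p zeta pr zp.
Let sum_e_mul_nz' := @sum_e_mul_nz p zeta pr zp.

Lemma countN (j : 'F_p) :
  p%:R * (#|[set x : F | f x == j]|)%:R =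
  #|F|%:R + eps%:~R * (p ^ k)%:R * (if fstar 0 == j then p%:R - 1 else -1) :> algC.
Proof.
rewrite card_sum mulr_sumr.
have h x : p%:R * ((x \in [set x | f x == j])%:R) = \sum_(y : 'F_p) e (y * (f x - j)).
  by rewrite inE sum_e_mul' (@subr_eq0 _ (f x) j); case: (f x == j) => /=; [rewrite mulr1|rewrite mulr0].
rewrite (eq_bigr _ (fun x _ => h x)) exchange_big (bigD1 0) //=.
have h0 : \sum_(x : F) e (0 * (f x - j)) = #|F|%:R.
  by under eq_bigr do rewrite mul0r e0'; rewrite sumr_const.
have h1 y : y != 0 -> \sum_(x : F) e (y * (f x - j)) = eps%:~R * (p ^ k)%:R * e (y * (fstar 0 - j)).
  move=> y0; have := @sigmaW y 0 y0.
  under eq_bigr do rewrite mul0r tr0' addr0.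
  move=> H.
  have -> : \sum_(x : F) e (y * (f x - j)) = (\sum_(x : F) e (y * f x)) * e (y * - j).
    by rewrite mulr_suml; apply: eq_bigr => x _; rewrite -eD' mulrDr.
  by rewrite H mulrDr eD' mulrA.
rewrite h0 (eq_bigr _ h1) -mulr_sumr sum_e_mul_nz' (@subr_eq0 _ (fstar 0) j).
by [].
Qed.


Definition D := [set x : F | (x != 0) && (f x == 0)].
Definition chiD (b : F) : algC := \sum_x (x \in D)%:R * e (tr (b * x)).

Lemma chiZ b :
  p%:R * (1 + chiD b) = (if b == 0 then #|F|%:R else 0) +
    eps%:~R * (p ^ k)%:R * (if fstar b == 0 then p%:R - 1 else -1).
Proof.
have Z : 1 + chiD b = \sum_x (f x == 0)%:R * e (tr (b * x)).
  rewrite /chiD (bigD1 0) //= [in RHS](bigD1 0) //= f0 eqxx mulr0 tr0' e0' mul1r inE eqxx /= mul0r add0r.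
  by congr (1 + _); apply: eq_bigr => x x0; rewrite inE x0.
rewrite Z mulr_sumr.
have h x : p%:R * ((f x == 0)%:R * e (tr (b * x))) = \sum_(y : 'F_p) e (y * f x + tr (b * x)).
  have s0 : p%:R * (f x == 0)%:R = \sum_(y : 'F_p) e (y * f x) :> algC.
    by rewrite sum_e_mul'; case: (f x == 0) => /=; [rewrite mulr1|rewrite mulr0].
  by rewrite mulrA s0 mulr_suml; apply: eq_bigr => y _; rewrite eD'.
rewrite (eq_bigr _ (fun x _ => h x)) exchange_big (bigD1 0) //=.
have h0 : \sum_x e (0 * f x + tr (b * x)) = (if b == 0 then #|F|%:R else 0).
  by under eq_bigr do rewrite mul0r add0r mulrC; exact: orth.
rewrite h0; congr (_ + _).
have h1 a : a != 0 -> \sum_x e (phi p l a * f x + tr (b * x)) = eps%:~R * (p ^ k)%:R * e (a * fstar b).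
  move=> a0.
  have ia0 : io a != 0 by rewrite io_eq0'.
  rewrite (reindex_inj (mulfI ia0)) /= -(@sigmaW a b a0); apply: eq_bigr => x _.
  have fh : f (io a * x) = a ^ l * f x := fhom a x.
  rewrite fh [b * _]mulrCA trZ' /phi -mulrA mulKf ?expfz_neq0 //.
  by rewrite mulrDr.
rewrite (reindex_inj (@phi_inj p l pr gl)) /=.
rewrite (eq_bigl (fun a => a != 0)); last by move=> a; rewrite /= phi_eq0.
by rewrite (eq_bigr _ h1) -mulr_sumr sum_e_mul_nz'.
Qed.


Lemma two_neq0 : (2%:R : F) != 0.
Proof.
rewrite -(dvdn_pcharf pcharF); apply/negP => /(dvdn_leq (isT : (0 < 2)%N)) h.
have p2 : p = 2%N by apply/eqP; rewrite eqn_leq h prime_gt1.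
by move: odd_p; rewrite p2.
Qed.

Lemma neq_opp (x : F) : x != 0 -> x != - x.
Proof.
move=> x0; apply/eqP => h.
have : x * 2%:R = 0 by rewrite mulr_natr mulr2n {2}h subrr.
by move/eqP; rewrite mulf_eq0 (negPf x0) (negPf two_neq0).
Qed.

Lemma even_set (S : {set F}) : (forall x, x \in S -> - x \in S) -> 0 \notin S -> ~~ odd #|S|.
Proof.
move=> SN S0.
pose B := [set x : F | (enum_rank x < enum_rank (- x))%N].
have E : S :\: B = [set - x | x in S :&: B].
  rewrite (can2_imset_pre _ opprK opprK); apply/setP => y; rewrite !inE opprK.
  case yS: (y \in S).
    have nyS : - y \in S by apply: SN.
    have y0 : y != 0 by apply: contraTneq yS => ->.
    have r : enum_rank y != enum_rank (- y) by rewrite (inj_eq enum_rank_inj) neq_opp.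
    have r2 : (enum_rank (- y) : nat) != enum_rank y by rewrite val_eqE eq_sym.
    by rewrite nyS /= andbT -leqNgt leq_eqVlt (negPf r2).
  case nyS: (- y \in S); first last. by rewrite andbF.
  by move: (SN _ nyS); rewrite opprK yS.
have := cardsID B S; rewrite E card_imset; last exact: oppr_inj.
by move=> <-; rewrite addnn odd_double.
Qed.

Lemma pnz : (p%:R : algC) != 0.
Proof. by rewrite pnatr_eq0 -lt0n prime_gt0. Qed.

Lemma D_opp x : x \in D -> - x \in D.
Proof. by rewrite !inE oppr_eq0 fN. Qed.

Lemma D0 : 0 \notin D.
Proof. by rewrite inE eqxx. Qed.

Lemma fstar0 : fstar 0 = 0.
Proof.
apply/eqP; apply/negP => /negP c0.
have two : (2%:R : 'F_p) != 0.
  rewrite -(dvdn_pcharf (pchar_Fp pr)); apply/negP => /(dvdn_leq (isT : (0 < 2)%N)) h.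
  have p2 : p = 2%N by apply/eqP; rewrite eqn_leq h prime_gt1.
  by move: odd_p; rewrite p2.
pose j := fstar 0 + fstar 0.
have j0 : j != 0 by rewrite /j -mulr2n -mulr_natr mulf_neq0.
have jc : (fstar 0 == j) = false.
  apply/eqP => h; move/eqP: c0; apply.
  by have := congr1 (fun z => z - fstar 0) h; rewrite /j /= subrr addrK => <-.
have N : #|[set x | f x == j]| = #|[set x | f x == 0]|.
  apply/eqP; rewrite -(eqr_nat algC) -(inj_eq (mulfI pnz)) !countN jc (negPf c0).
  by [].
have oddZ : odd #|[set x | f x == 0]|.
  have -> : [set x | f x == 0] = 0 |: D.
    by apply/setP => x; rewrite !inE; case: (eqVneq x 0) => [->|x0] /=; rewrite ?f0 ?eqxx.
  by rewrite cardsU1 D0 add1n /= (negPf (@even_set D D_opp D0)).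
have evenj : ~~ odd #|[set x | f x == j]|.
  by apply: even_set => [x|]; rewrite !inE ?fN // f0 eq_sym (negPf j0).
by move: evenj; rewrite N oddZ.
Qed.


Local Notation P := (p%:R : algC).
Local Notation q := ((p ^ k.-1)%:R : algC).
Local Notation E := (eps%:~R : algC).

Lemma pk_eq : (p ^ k)%:R = P * q :> algC.
Proof. by rewrite -natrM -expnS prednK // k_gt0. Qed.

Lemma cardF_eq : #|F|%:R = P * P * q * q :> algC.
Proof. by rewrite cardF mul2n -addnn expnD natrM pk_eq mulrACA !mulrA. Qed.

Lemma hE : E = 1 \/ E = -1.
Proof. by case: heps => ->; [left|right]. Qed.

Lemma q0 : q != 0.
Proof. by rewrite pnatr_eq0 expn_eq0 negb_and -lt0n prime_gt0. Qed.

Lemma chiD0 : chiD 0 = #|D|%:R.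
Proof.
rewrite card_sum /chiD; apply: eq_bigr => x _.
by rewrite mul0r tr0' e0' mulr1.
Qed.

Lemma cardD_eq : #|D|%:R = (P * q - E) * (q + E).
Proof.
apply: (@arith_d P q E _ hE pnz).
have := chiZ 0; rewrite chiD0 fstar0 !eqxx cardF_eq pk_eq => ->.
by [].
Qed.

Lemma chi_sq b : b != 0 -> chiD b * chiD b = AA P q E * chiD b + BB P q E.
Proof.
move=> b0; apply: (@arith_chi _ _ _ _ (fstar b == 0) pnz).
by rewrite chiZ (negPf b0) add0r pk_eq.
Qed.


Definition count (g : F) :=
  #|[set xy : F * F | [&& xy.1 \in D, xy.2 \in D & xy.1 - xy.2 == g]]|.

Lemma count_sum g : (count g)%:R =
  \sum_x \sum_y (x \in D)%:R * (y \in D)%:R * (x - y == g)%:R :> algC.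
Proof.
rewrite /count card_sum pair_big /=; apply: eq_bigr => [[x y]] _; rewrite inE /=.
by case: (x \in D); case: (y \in D); case: (x - y == g); rewrite /= ?mulr1 ?mulr0 ?mul0r.
Qed.

Lemma chiDN b : chiD b = \sum_y (y \in D)%:R * e (tr (b * - y)).
Proof.
rewrite /chiD (reindex_inj oppr_inj) /=; apply: eq_bigr => y _.
by rewrite !inE oppr_eq0 fN.
Qed.

Lemma eg_split b x y g :
  e (tr (b * (x - y - g))) = e (tr (b * x)) * e (tr (b * - y)) * e (tr (b * - g)).
Proof. by rewrite !mulrDr !trD' !eD'. Qed.

Lemma fourier g : #|F|%:R * (count g)%:R = \sum_b chiD b * chiD b * e (tr (b * - g)).
Proof.
rewrite count_sum mulr_sumr.
transitivity (\sum_x \sum_y \sum_b ((x \in D)%:R * e (tr (b * x))) *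
    ((y \in D)%:R * e (tr (b * - y))) * e (tr (b * - g))).
  apply: eq_bigr => x _; rewrite mulr_sumr; apply: eq_bigr => y _.
  have h : #|F|%:R * (x - y == g)%:R = \sum_b e (tr (b * (x - y - g))) :> algC.
    by rewrite orth subr_eq0; case: (x - y == g); rewrite /= ?mulr1 ?mulr0.
  rewrite mulrCA h mulr_sumr; apply: eq_bigr => b _; rewrite eg_split.
  by rewrite !mulrA; congr (_ * _); rewrite -!mulrA; congr (_ * _); rewrite mulrCA.
rewrite (eq_bigr _ (fun x _ => exchange_big _ _ _ _ _ _)) exchange_big /=.
apply: eq_bigr => b _.
rewrite {2}chiDN /chiD big_distrlr /= mulr_suml; apply: eq_bigr => x _.
by rewrite mulr_suml.
Qed.


Lemma sum_chi_eg g : \sum_b chiD b * e (tr (b * - g)) = #|F|%:R * (g \in D)%:R.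
Proof.
rewrite /chiD; under eq_bigr do rewrite mulr_suml.
rewrite exchange_big /=.
have h x : \sum_b (x \in D)%:R * e (tr (b * x)) * e (tr (b * - g)) =
    (x \in D)%:R * (if x - g == 0 then #|F|%:R else 0).
  rewrite -orth mulr_sumr; apply: eq_bigr => b _.
  by rewrite -mulrA -eD' -trD' -mulrDr.
rewrite (eq_bigr _ (fun x _ => h x)) (bigD1 g) //= subrr eqxx big1 ?addr0; first by rewrite mulrC.
by move=> x xg; rewrite subr_eq0 (negPf xg) mulr0.
Qed.

Lemma count_eq g : g != 0 ->
  #|F|%:R * (count g)%:R = #|D|%:R * #|D|%:R +
    AA P q E * (#|F|%:R * (g \in D)%:R - #|D|%:R) - BB P q E.
Proof.
move=> g0.
rewrite fourier (bigD1 0) //= chiD0 mul0r tr0' e0' mulr1.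
rewrite (eq_bigr (fun b => (AA P q E * chiD b + BB P q E) * e (tr (b * - g)))); last first.
  by move=> b b0; rewrite chi_sq.
under eq_bigr do rewrite mulrDl -mulrA.
rewrite big_split /= -!mulr_sumr.
have s1 : \sum_(b | b != 0) chiD b * e (tr (b * - g)) = #|F|%:R * (g \in D)%:R - #|D|%:R.
  by rewrite -sum_chi_eg [in RHS](bigD1 0) //= chiD0 mul0r tr0' e0' mulr1 addrC addrK.
have s2 : \sum_(b | b != 0) e (tr (b * - g)) = -1.
  have := orth (- g); rewrite oppr_eq0 (negPf g0) (bigD1 0) //= mul0r tr0' e0'.
  by move/eqP; rewrite addrC addr_eq0 => /eqP.
by rewrite s1 s2 mulrN1 addrA.
Qed.

Lemma pds_count g : g != 0 -> (count g)%:R =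
  (if g \in D then (q + E) * (q + E) - (1 + 1 + 1) * E * (q + E) + E * (P * q)
   else (q + E) * q).
Proof.
move=> g0; have := @count_eq g g0; rewrite cardD_eq cardF_eq => H.
exact: (@arith_final P q E _ _ (g \in D) hE pnz q0 H).
Qed.


Lemma intrn (m : nat) : ((m%:Z)%:~R : algC) = m%:R.
Proof. by []. Qed.

Lemma main_res :
  let v : int := (p ^ (2 * k))%N%:Z in
  let d : int := ((p ^ k)%N%:Z - eps) * ((p ^ (k - 1))%N%:Z + eps) in
  let lam : int := ((p ^ (k - 1))%N%:Z + eps) ^+ 2
                   - 3%:Z * eps * ((p ^ (k - 1))%N%:Z + eps) + eps * (p ^ k)%N%:Z in
  let mu : int := ((p ^ (k - 1))%N%:Z + eps) * (p ^ (k - 1))%N%:Z in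
  @is_PDS F D v d lam mu /\ @is_SRG F (@cayley F D) v d lam mu.
Proof.
move=> v d lam mu.
have cv : #|F|%:Z = v by rewrite /v cardF.
have cd : #|D|%:Z = d.
  apply: (@intr_inj algC); rewrite /d rmorphM rmorphB rmorphD /= !intrn subn1 cardD_eq pk_eq.
  by [].
have cc g : g != 0 -> (count g)%:Z = (if g \in D then lam else mu).
  move=> g0; apply: (@intr_inj algC); rewrite intrn pds_count //.
  case: (g \in D).
    rewrite /lam rmorphD rmorphB !rmorphM rmorphXn rmorphD /= !intrn subn1 pk_eq ?natrX.
    have -> : (3 : algC) = 1 + 1 + 1 by rewrite -[3%N]/(1 + 1 + 1)%N !natrD.
    by [].
  by rewrite /mu rmorphM rmorphD /= !intrn subn1 ?natrX.
rewrite /is_PDS /is_SRG; split.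
  split; [exact: cv | exact: cd | exact: D0 | move=> g g0; exact: cc].
have sym : symmetric (cayley D).
  move=> x y; rewrite /cayley; apply/idP/idP => /D_opp; by rewrite opprB.
split; [exact: cv | exact: sym | idtac | idtac | idtac].
- by move=> x; rewrite /cayley subrr (negPf D0).
- move=> x; rewrite -cd.
  have -> : [set y | cayley D x y] = (fun y => x - y) @^-1: D by apply/setP => y; rewrite !inE.
  by rewrite card_preimset //; move=> y z /= /addrI /oppr_inj.
- move=> x y xy.
  have g0 : x - y != 0 by rewrite subr_eq0.
  rewrite /cayley -cc //.
  congr (Posz _).
  rewrite /count.
  have -> : [set xy : F * F | [&& xy.1 \in D, xy.2 \in D & xy.1 - xy.2 == x - y]] =
      [set (x - z, y - z) | z in [set z | cayley D x z && cayley D y z]].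
    apply/setP => [[a b]]; rewrite inE /=; apply/idP/imsetP.
      case/and3P => aD bD /eqP ab; exists (x - a).
        by rewrite inE /cayley subKr' yxa -ab subKr' aD bD.
      by rewrite subKr' yxa -ab subKr'.
    move=> [z]; rewrite inE /cayley => /andP [xz yz] [-> ->].
    by rewrite xz yz subBB eqxx.
  by rewrite card_imset // => z1 z2 [] /addrI /oppr_inj.
Qed.

End Main.


Theorem theorem1 (p k : nat) (F : finFieldType) (zeta : algC)
  (f : F -> 'F_p) (eps : int) :
  p \in [pchar F] -> #|F| = (p ^ (2 * k))%N ->
  p.-primitive_root zeta ->
  @conditionA F p k zeta f eps ->
  let D := [set x : F | (x != 0) && (f x == 0)] in
  let v : int := (p ^ (2 * k))%N%:Z in
  let d : int := ((p ^ k)%N%:Z - eps) * ((p ^ (k - 1))%N%:Z + eps) in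
  let lam : int := ((p ^ (k - 1))%N%:Z + eps) ^+ 2
                   - 3%:Z * eps * ((p ^ (k - 1))%N%:Z + eps) + eps * (p ^ k)%N%:Z in
  let mu : int := ((p ^ (k - 1))%N%:Z + eps) * (p ^ (k - 1))%N%:Z in
  @is_PDS F D v d lam mu /\ @is_SRG F (@cayley F D) v d lam mu.
Proof.
move=> pcharF cardF zp [_ [odd_p [f0 [fN [[l [gl fhom]] [heps [fstar Wf]]]]]]].
exact: (@main_res p k F zeta f eps pcharF cardF zp odd_p f0 fN l gl fhom heps fstar Wf).
Qed.
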